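(* Let $\mathbb{F}$ be an algebraically closed field with $\mathrm{char}\,\mathbb{F}=2$, and let $\mathcal{A}$ be a (not necessarily unital) subalgebra of $\mathbf{O}$ with $\mathcal{A}\not\subseteq\mathbf{O}_0$ and $\dim\mathcal{A}\ge3$. Then there exists $g\in{\rm G}_2$ such that either (a) $\{e_1,e_2,\mathbf{u}_1\}\subseteq g\mathcal{A}$; or (b) $\{e_1,\mathbf{u}_1,\mathbf{v}_2\}\subseteq g\mathcal{A}$.
   Context: The split octonion algebra $\mathbf{O}$ is the 8-dimensional $\mathbb{F}$-vector space of formal matrices $a=\begin{pmatrix}\alpha&\mathbf{u}\\ \mathbf{v}&\beta\end{pmatrix}$ with $\alpha,\beta\in\mathbb{F}$, $\mathbf{u},\mathbf{v}\in\mathbb{F}^3$, with multiplication $\begin{pmatrix}\alpha&\mathbf{u}\\ \mathbf{v}&\beta\end{pmatrix}\begin{pmatrix}\alpha'&\mathbf{u}'\\ \mathbf{v}'&\beta'\end{pmatrix}=\begin{pmatrix}\alpha\alpha'+\mathbf{u}\cdot\mathbf{v}'&\alpha\mathbf{u}'+\beta'\mathbf{u}-\mathbf{v}\times\mathbf{v}'\\ \alpha'\mathbf{v}+\beta\mathbf{v}'+\mathbf{u}\times\mathbf{u}'&\beta\beta'+\mathbf{v}\cdot\mathbf{u}'\end{pmatrix}$ (dot product and cross product on $\mathbb{F}^3$). Trace $\mathrm{tr}(a)=\alpha+\beta$, $\mathbf{O}_0=\{a\in\mathbf{O}\mid\mathrm{tr}(a)=0\}$. With $\mathbf{c}_1,\mathbf{c}_2,\mathbf{c}_3$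 the standard basis of $\mathbb{F}^3$: $e_1$ has $\alpha=1$ and all else $0$, $e_2$ has $\beta=1$ and all else $0$, $\mathbf{u}_i$ has $\mathbf{u}=\mathbf{c}_i$ and all else $0$, $\mathbf{v}_i$ has $\mathbf{v}=\mathbf{c}_i$ and all else $0$. ${\rm G}_2=\mathrm{Aut}(\mathbf{O})$. *)

(* Defs.v *)
From HB Require Import structures.
From mathcomp Require Import all_boot all_order all_algebra all_field.
Set Implicit Arguments. Unset Strict Implicit. Unset Printing Implicit Defensive.
Import GRing.Theory.
Local Open Scope ring_scope.

(* Split octonions O over F, encoded as row vectors 'rV[F]_8 with coordinates
   [alpha; u1; u2; u3; v1; v2; v3; beta]. *)
Section Oct.
Variable F : fieldType.

Definition oct (a u1 u2 u3 v1 v2 v3 b : F) : 'rV[F]_8 :=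
  \row_(i < 8) nth 0 [:: a; u1; u2; u3; v1; v2; v3; b] i.

Definition ocoord (x : 'rV[F]_8) (k : nat) : F := x 0 (inord k).

Definition omul (x y : 'rV[F]_8) : 'rV[F]_8 :=
  let a := ocoord x 0 in let u1 := ocoord x 1 in let u2 := ocoord x 2 in
  let u3 := ocoord x 3 in let v1 := ocoord x 4 in let v2 := ocoord x 5 in
  let v3 := ocoord x 6 in let b := ocoord x 7 in
  let a' := ocoord y 0 in let u1' := ocoord y 1 in let u2' := ocoord y 2 in
  let u3' := ocoord y 3 in let v1' := ocoord y 4 in let v2' := ocoord y 5 in
  let v3' := ocoord y 6 in let b' := ocoord y 7 in
  oct (a * a' + (u1 * v1' + u2 * v2' + u3 * v3'))
      (a * u1' + b' * u1 - (v2 * v3' - v3 * v2'))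
      (a * u2' + b' * u2 - (v3 * v1' - v1 * v3'))
      (a * u3' + b' * u3 - (v1 * v2' - v2 * v1'))
      (a' * v1 + b * v1' + (u2 * u3' - u3 * u2'))
      (a' * v2 + b * v2' + (u3 * u1' - u1 * u3'))
      (a' * v3 + b * v3' + (u1 * u2' - u2 * u1'))
      (b * b' + (v1 * u1' + v2 * u2' + v3 * u3')).

Definition otr (x : 'rV[F]_8) : F := ocoord x 0 + ocoord x 7.

Definition oe1 : 'rV[F]_8 := oct 1 0 0 0 0 0 0 0.
Definition oe2 : 'rV[F]_8 := oct 0 0 0 0 0 0 0 1.
Definition ou1 : 'rV[F]_8 := oct 0 1 0 0 0 0 0 0.
Definition ov2 : 'rV[F]_8 := oct 0 0 0 0 0 1 0 0.

Definition is_subalgebra (A : {vspace 'rV[F]_8}) : Prop :=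
  forall x y, x \in A -> y \in A -> omul x y \in A.

Definition is_G2 (g : 'rV[F]_8 -> 'rV[F]_8) : Prop :=
  [/\ linear g, bijective g & forall x y, g (omul x y) = omul (g x) (g y)].

Definition in_image (g : 'rV[F]_8 -> 'rV[F]_8) (A : {vspace 'rV[F]_8}) z : Prop :=
  exists2 x, x \in A & g x = z.
End Oct.

(* Main.v *)
From HB Require Import structures.
From mathcomp Require Import all_boot all_order all_algebra all_field.
From mathcomp Require Import ring.
From Stdlib Require Import Classical.
Require Import Defs.
Set Implicit Arguments. Unset Strict Implicit. Unset Printing Implicit Defensive.
Import GRing.Theory.
Local Open Scope ring_scope.


Section Basics.
Variable F : fieldType.
Local Notation O := ('rV[F]_8).

Lemma ocoord_oct (a u1 u2 u3 v1 v2 v3 b : F) k : (k < 8)%N ->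
  ocoord (oct a u1 u2 u3 v1 v2 v3 b) k = nth 0 [:: a; u1; u2; u3; v1; v2; v3; b] k.
Proof. by move=> hk; rewrite /ocoord /oct mxE inordK. Qed.

Lemma ocoordD (x y : O) k : ocoord (x + y) k = ocoord x k + ocoord y k.
Proof. by rewrite /ocoord mxE. Qed.
Lemma ocoordZ (c : F) (x : O) k : ocoord (c *: x) k = c * ocoord x k.
Proof. by rewrite /ocoord mxE. Qed.
Lemma ocoordN (x : O) k : ocoord (- x) k = - ocoord x k.
Proof. by rewrite /ocoord mxE. Qed.
Lemma ocoord0 k : ocoord (0 : O) k = 0.
Proof. by rewrite /ocoord mxE. Qed.

Lemma oct_ext (x y : O) : (forall k, (k < 8)%N -> ocoord x k = ocoord y k) -> x = y.
Proof.
move=> H; apply/rowP => i.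
have := H i (ltn_ord i); rewrite /ocoord.
by have -> : inord i = i by apply/val_inj; rewrite /= inordK.
Qed.

Lemma octE (x : O) : x = oct (ocoord x 0) (ocoord x 1) (ocoord x 2) (ocoord x 3)
  (ocoord x 4) (ocoord x 5) (ocoord x 6) (ocoord x 7).
Proof. by apply: oct_ext => -[|[|[|[|[|[|[|[|//]]]]]]]] _; rewrite ocoord_oct. Qed.

Lemma octD (a u1 u2 u3 v1 v2 v3 b a' u1' u2' u3' v1' v2' v3' b' : F) :
  oct a u1 u2 u3 v1 v2 v3 b + oct a' u1' u2' u3' v1' v2' v3' b' =
  oct (a + a') (u1 + u1') (u2 + u2') (u3 + u3') (v1 + v1') (v2 + v2') (v3 + v3') (b + b').
Proof. by apply: oct_ext => -[|[|[|[|[|[|[|[|//]]]]]]]] _; rewrite ocoordD !ocoord_oct. Qed.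

Lemma octZ (c a u1 u2 u3 v1 v2 v3 b : F) :
  c *: oct a u1 u2 u3 v1 v2 v3 b =
  oct (c * a) (c * u1) (c * u2) (c * u3) (c * v1) (c * v2) (c * v3) (c * b).
Proof. by apply: oct_ext => -[|[|[|[|[|[|[|[|//]]]]]]]] _; rewrite ocoordZ !ocoord_oct. Qed.

Lemma octN (a u1 u2 u3 v1 v2 v3 b : F) :
  - oct a u1 u2 u3 v1 v2 v3 b =
  oct (- a) (- u1) (- u2) (- u3) (- v1) (- v2) (- v3) (- b).
Proof. by apply: oct_ext => -[|[|[|[|[|[|[|[|//]]]]]]]] _; rewrite ocoordN !ocoord_oct. Qed.

Lemma oct0 : (0 : O) = oct 0 0 0 0 0 0 0 0.
Proof. by apply: oct_ext => -[|[|[|[|[|[|[|[|//]]]]]]]] _; rewrite ocoord0 !ocoord_oct. Qed.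

Lemma omul_oct (a u1 u2 u3 v1 v2 v3 b a' u1' u2' u3' v1' v2' v3' b' : F) :
  omul (oct a u1 u2 u3 v1 v2 v3 b) (oct a' u1' u2' u3' v1' v2' v3' b') =
  oct (a * a' + (u1 * v1' + u2 * v2' + u3 * v3'))
      (a * u1' + b' * u1 - (v2 * v3' - v3 * v2'))
      (a * u2' + b' * u2 - (v3 * v1' - v1 * v3'))
      (a * u3' + b' * u3 - (v1 * v2' - v2 * v1'))
      (a' * v1 + b * v1' + (u2 * u3' - u3 * u2'))
      (a' * v2 + b * v2' + (u3 * u1' - u1 * u3'))
      (a' * v3 + b * v3' + (u1 * u2' - u2 * u1'))
      (b * b' + (v1 * u1' + v2 * u2' + v3 * u3')).
Proof. by rewrite /omul !ocoord_oct. Qed.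

Lemma otr_oct (a u1 u2 u3 v1 v2 v3 b : F) : otr (oct a u1 u2 u3 v1 v2 v3 b) = a + b.
Proof. by rewrite /otr !ocoord_oct. Qed.

Lemma mkG2 (g g' : O -> O) :
  (forall c x y, g (c *: x + y) = c *: g x + g y) -> cancel g g' -> cancel g' g ->
  (forall x y, g (omul x y) = omul (g x) (g y)) -> is_G2 g.
Proof. move=> Hl H1 H2 Hm; split; [by move=> c x y; apply: Hl | by exists g' | exact: Hm]. Qed.

Lemma G2_comp (g h : O -> O) : is_G2 g -> is_G2 h -> is_G2 (h \o g).
Proof.
case=> Lg Bg Mg [Lh Bh Mh]; split.
- by move=> c x y /=; rewrite Lg Lh.
- exact: bij_comp.
- by move=> x y /=; rewrite Mg Mh.
Qed.

Lemma G2_lin (g : O -> O) c x y : is_G2 g -> g (c *: x + y) = c *: g x + g y.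
Proof. by case=> L _ _; apply: L. Qed.

Lemma G2_0 (g : O -> O) : is_G2 g -> g 0 = 0.
Proof.
move=> H; have := G2_lin 1 0 0 H; rewrite !scale1r addr0.
by move/(congr1 (fun z => z - g 0)); rewrite subrr addrK => <-.
Qed.

Lemma G2_add (g : O -> O) x y : is_G2 g -> g (x + y) = g x + g y.
Proof. by move=> H; rewrite -[x]scale1r G2_lin // !scale1r. Qed.

Lemma G2_scale (g : O -> O) c x : is_G2 g -> g (c *: x) = c *: g x.
Proof. by move=> H; rewrite -[c *: x]addr0 G2_lin // G2_0 // addr0. Qed.

Lemma G2_inj (g : O -> O) : is_G2 g -> injective g.
Proof. by case=> _ B _; apply: bij_inj. Qed.

Lemma G2_mul (g : O -> O) x y : is_G2 g -> g (omul x y) = omul (g x) (g y).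
Proof. by case=> _ _ M; apply: M. Qed.

End Basics.

Section Maps.
Variable F : fieldType.
Local Notation O := ('rV[F]_8).

Definition dt (x1 x2 x3 y1 y2 y3 : F) := x1 * y1 + x2 * y2 + x3 * y3.
Definition cx1 (x1 x2 x3 y1 y2 y3 : F) := x2 * y3 - x3 * y2.
Definition cx2 (x1 x2 x3 y1 y2 y3 : F) := x3 * y1 - x1 * y3.
Definition cx3 (x1 x2 x3 y1 y2 y3 : F) := x1 * y2 - x2 * y1.

Definition Xw0 (w1 w2 w3 a u1 u2 u3 v1 v2 v3 b : F) : O :=
  oct (a - dt w1 w2 w3 v1 v2 v3)
      (u1 + (a - b) * w1 - dt w1 w2 w3 v1 v2 v3 * w1)
      (u2 + (a - b) * w2 - dt w1 w2 w3 v1 v2 v3 * w2)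
      (u3 + (a - b) * w3 - dt w1 w2 w3 v1 v2 v3 * w3)
      (v1 + cx1 w1 w2 w3 u1 u2 u3) (v2 + cx2 w1 w2 w3 u1 u2 u3)
      (v3 + cx3 w1 w2 w3 u1 u2 u3)
      (b + dt w1 w2 w3 v1 v2 v3).
Definition Xw w1 w2 w3 (x : O) : O :=
  Xw0 w1 w2 w3 (ocoord x 0) (ocoord x 1) (ocoord x 2) (ocoord x 3)
    (ocoord x 4) (ocoord x 5) (ocoord x 6) (ocoord x 7).
Lemma Xw_oct w1 w2 w3 (a u1 u2 u3 v1 v2 v3 b : F) :
  Xw w1 w2 w3 (oct a u1 u2 u3 v1 v2 v3 b) = Xw0 w1 w2 w3 a u1 u2 u3 v1 v2 v3 b.
Proof. by rewrite /Xw !ocoord_oct. Qed.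

Definition Yw0 (w1 w2 w3 a u1 u2 u3 v1 v2 v3 b : F) : O :=
  oct (a - dt w1 w2 w3 u1 u2 u3)
      (u1 + cx1 w1 w2 w3 v1 v2 v3) (u2 + cx2 w1 w2 w3 v1 v2 v3)
      (u3 + cx3 w1 w2 w3 v1 v2 v3)
      (v1 + (a - b) * w1 - dt w1 w2 w3 u1 u2 u3 * w1)
      (v2 + (a - b) * w2 - dt w1 w2 w3 u1 u2 u3 * w2)
      (v3 + (a - b) * w3 - dt w1 w2 w3 u1 u2 u3 * w3)
      (b + dt w1 w2 w3 u1 u2 u3).
Definition Yw w1 w2 w3 (x : O) : O :=
  Yw0 w1 w2 w3 (ocoord x 0) (ocoord x 1) (ocoord x 2) (ocoord x 3)
    (ocoord x 4) (ocoord x 5) (ocoord x 6) (ocoord x 7).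
Lemma Yw_oct w1 w2 w3 (a u1 u2 u3 v1 v2 v3 b : F) :
  Yw w1 w2 w3 (oct a u1 u2 u3 v1 v2 v3 b) = Yw0 w1 w2 w3 a u1 u2 u3 v1 v2 v3 b.
Proof. by rewrite /Yw !ocoord_oct. Qed.

Definition Sg (x : O) : O :=
  oct (ocoord x 7) (- ocoord x 4) (- ocoord x 5) (- ocoord x 6)
      (- ocoord x 1) (- ocoord x 2) (- ocoord x 3) (ocoord x 0).
Lemma Sg_oct (a u1 u2 u3 v1 v2 v3 b : F) :
  Sg (oct a u1 u2 u3 v1 v2 v3 b) = oct b (- v1) (- v2) (- v3) (- u1) (- u2) (- u3) a.
Proof. by rewrite /Sg !ocoord_oct. Qed.

Ltac unf := rewrite /Xw0 /Yw0 /dt /cx1 /cx2 /cx3.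

Lemma Xw_G2 w1 w2 w3 : is_G2 (Xw w1 w2 w3).
Proof.
apply: (@mkG2 _ _ (Xw (- w1) (- w2) (- w3))).
- move=> c x y; rewrite (octE x) (octE y) octZ octD !Xw_oct octZ octD; unf.
  by congr oct; ring.
- move=> x; rewrite (octE x) Xw_oct /Xw0 Xw_oct.
  by unf; congr oct; ring.
- move=> x; rewrite (octE x) Xw_oct /Xw0 Xw_oct.
  by unf; congr oct; ring.
- move=> x y; rewrite (octE x) (octE y) omul_oct !Xw_oct; unf; rewrite omul_oct.
  by congr oct; ring.
Qed.

Lemma Yw_G2 w1 w2 w3 : is_G2 (Yw w1 w2 w3).
Proof.
apply: (@mkG2 _ _ (Yw (- w1) (- w2) (- w3))).
- move=> c x y; rewrite (octE x) (octE y) octZ octD !Yw_oct octZ octD; unf.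
  by congr oct; ring.
- move=> x; rewrite (octE x) Yw_oct /Yw0 Yw_oct.
  by unf; congr oct; ring.
- move=> x; rewrite (octE x) Yw_oct /Yw0 Yw_oct.
  by unf; congr oct; ring.
- move=> x y; rewrite (octE x) (octE y) omul_oct !Yw_oct; unf; rewrite omul_oct.
  by congr oct; ring.
Qed.

Lemma Sg_G2 : is_G2 Sg.
Proof.
apply: (@mkG2 _ _ Sg).
- move=> c x y; rewrite (octE x) (octE y) octZ octD !Sg_oct octZ octD.
  by congr oct; ring.
- by move=> x; rewrite (octE x) !Sg_oct !opprK.
- by move=> x; rewrite (octE x) !Sg_oct !opprK.
- move=> x y; rewrite (octE x) (octE y) omul_oct !Sg_oct omul_oct.
  by congr oct; ring.
Qed.

End Maps.


Section SL.
Variable F : fieldType.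
Local Notation O := ('rV[F]_8).
Variables a1 a2 a3 b1 b2 b3 c1 c2 c3 : F.

Definition det3 := dt a1 a2 a3 (cx1 b1 b2 b3 c1 c2 c3) (cx2 b1 b2 b3 c1 c2 c3) (cx3 b1 b2 b3 c1 c2 c3).

Definition SL0 (al u1 u2 u3 v1 v2 v3 be : F) : O :=
  let B1 := b1 / det3 in let B2 := b2 / det3 in let B3 := b3 / det3 in
  oct al (dt (cx1 B1 B2 B3 c1 c2 c3) (cx2 B1 B2 B3 c1 c2 c3) (cx3 B1 B2 B3 c1 c2 c3) u1 u2 u3)
         (dt (cx1 c1 c2 c3 a1 a2 a3) (cx2 c1 c2 c3 a1 a2 a3) (cx3 c1 c2 c3 a1 a2 a3) u1 u2 u3)
         (dt (cx1 a1 a2 a3 B1 B2 B3) (cx2 a1 a2 a3 B1 B2 B3) (cx3 a1 a2 a3 B1 B2 B3) u1 u2 u3)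
         (dt a1 a2 a3 v1 v2 v3) (dt B1 B2 B3 v1 v2 v3) (dt c1 c2 c3 v1 v2 v3) be.

Definition SLi0 (al u1 u2 u3 v1 v2 v3 be : F) : O :=
  let B1 := b1 / det3 in let B2 := b2 / det3 in let B3 := b3 / det3 in
  oct al (u1 * a1 + u2 * B1 + u3 * c1) (u1 * a2 + u2 * B2 + u3 * c2)
         (u1 * a3 + u2 * B3 + u3 * c3)
         (v1 * cx1 B1 B2 B3 c1 c2 c3 + v2 * cx1 c1 c2 c3 a1 a2 a3 + v3 * cx1 a1 a2 a3 B1 B2 B3)
         (v1 * cx2 B1 B2 B3 c1 c2 c3 + v2 * cx2 c1 c2 c3 a1 a2 a3 + v3 * cx2 a1 a2 a3 B1 B2 B3)
         (v1 * cx3 B1 B2 B3 c1 c2 c3 + v2 * cx3 c1 c2 c3 a1 a2 a3 + v3 * cx3 a1 a2 a3 B1 B2 B3)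
         be.

Definition SL (x : O) : O := SL0 (ocoord x 0) (ocoord x 1) (ocoord x 2) (ocoord x 3)
    (ocoord x 4) (ocoord x 5) (ocoord x 6) (ocoord x 7).
Definition SLi (x : O) : O := SLi0 (ocoord x 0) (ocoord x 1) (ocoord x 2) (ocoord x 3)
    (ocoord x 4) (ocoord x 5) (ocoord x 6) (ocoord x 7).

Lemma SL_oct (al u1 u2 u3 v1 v2 v3 be : F) :
  SL (oct al u1 u2 u3 v1 v2 v3 be) = SL0 al u1 u2 u3 v1 v2 v3 be.
Proof. by rewrite /SL !ocoord_oct. Qed.
Lemma SLi_oct (al u1 u2 u3 v1 v2 v3 be : F) :
  SLi (oct al u1 u2 u3 v1 v2 v3 be) = SLi0 al u1 u2 u3 v1 v2 v3 be.
Proof. by rewrite /SLi !ocoord_oct. Qed.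

Hypothesis Hd : det3 != 0.

Ltac unfSL := rewrite /SL0 /SLi0 /dt /cx1 /cx2 /cx3.

Lemma SL_G2 : is_G2 SL.
Proof.
have Hd' := Hd; move: Hd'; rewrite /det3 /dt /cx1 /cx2 /cx3 => Hd'.
apply: (@mkG2 _ _ SLi).
- move=> c x y; rewrite (octE x) (octE y) octZ octD !SL_oct octZ.
  rewrite /SL0 octD; cbv zeta; rewrite /dt /cx1 /cx2 /cx3. by congr oct; ring.
- move=> x; rewrite (octE x) SL_oct /SL0 SLi_oct.
  unfSL; rewrite /det3 /dt /cx1 /cx2 /cx3; cbv zeta. by congr oct; field.
- move=> x; rewrite (octE x) SLi_oct /SLi0 SL_oct.
  unfSL; rewrite /det3 /dt /cx1 /cx2 /cx3; cbv zeta. by congr oct; field.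
- move=> x y; rewrite (octE x) (octE y) omul_oct !SL_oct; rewrite /SL0 omul_oct.
  unfSL; rewrite /det3 /dt /cx1 /cx2 /cx3; cbv zeta. by congr oct; field.
Qed.
End SL.


Section Img.
Variable F : fieldType.
Local Notation O := ('rV[F]_8).
Variable A : {vspace O}.
Hypothesis HA : is_subalgebra A.

Section G.
Variable g : O -> O.
Hypothesis Hg : is_G2 g.
Local Notation S := (in_image g A).

Lemma img0 : S 0.
Proof. by exists 0; [exact: mem0v | exact: G2_0]. Qed.
Lemma imgD x y : S x -> S y -> S (x + y).
Proof. by case=> a Ha <- [b Hb <-]; exists (a + b); [exact: memvD | rewrite G2_add]. Qed.
Lemma imgZ c x : S x -> S (c *: x).
Proof. by case=> a Ha <-; exists (c *: a); [exact: memvZ | rewrite G2_scale]. Qed.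
Lemma imgN x : S x -> S (- x).
Proof. by move=> H; rewrite -scaleN1r; apply: imgZ. Qed.
Lemma imgB x y : S x -> S y -> S (x - y).
Proof. by move=> H1 H2; apply: imgD => //; apply: imgN. Qed.
Lemma imgM x y : S x -> S y -> S (omul x y).
Proof. by case=> a Ha <- [b Hb <-]; exists (omul a b); [exact: HA | rewrite G2_mul]. Qed.
End G.

Lemma img_comp (g h : O -> O) y : in_image g A y -> in_image (h \o g) A (h y).
Proof. by case=> a Ha <-; exists a. Qed.

Lemma mem_span2 (x y : O) a b : a *: x + b *: y \in <<[:: x; y]>>%VS.
Proof. by rewrite span_cons span_seq1; apply: memv_add; apply: memvZ; apply: memv_line. Qed.

Lemma dimL (g : O -> O) : is_G2 g -> (3 <= \dim A)%N -> forall p q : O,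
  exists y, in_image g A y /\ y \notin <<[:: p; q]>>%VS.
Proof.
move=> Hg Hdim p q; apply: NNPP => Hn.
have H : forall x, x \in A -> g x \in <<[:: p; q]>>%VS.
  move=> x Hx; apply/negPn/negP => Hx'; apply: Hn; exists (g x); split => //; by exists x.
have Hl : linear g by case: Hg.
pose gL : {linear O -> O} := HB.pack g (GRing.isLinear.Build _ _ _ _ g Hl).
have E : linfun gL =1 g by apply: lfunE.
have K : lker (linfun gL) == 0%VS.
  by apply/lker0P => x y; rewrite !E; apply: (G2_inj Hg).
have D : \dim ((linfun gL) @: A)%VS = \dim A by apply: limg_dim_eq; rewrite (eqP K) capv0.
have Sub : ((linfun gL) @: A <= <<[:: p; q]>>)%VS.
  by apply/subvP => y /memv_imgP [x Hx ->]; rewrite E; apply: H.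
have := dimvS Sub; rewrite D => H1.
have := leq_trans H1 (dim_span [:: p; q]) => /= H2.
by have := leq_trans Hdim H2.
Qed.


Definition nz3 (x1 x2 x3 : F) := [|| x1 != 0, x2 != 0 | x3 != 0].

Lemma nz3F x1 x2 x3 : ~~ nz3 x1 x2 x3 -> [/\ x1 = 0, x2 = 0 & x3 = 0].
Proof. by rewrite /nz3 !negb_or !negbK => /and3P [/eqP -> /eqP -> /eqP ->]. Qed.

Lemma PU_eq (a u1 u2 u3 v1 v2 v3 b : F) :
  omul (oe1 F) (oct a u1 u2 u3 v1 v2 v3 b) -
  omul (omul (oe1 F) (oct a u1 u2 u3 v1 v2 v3 b)) (oe1 F) = oct 0 u1 u2 u3 0 0 0 0.
Proof. by rewrite /oe1 !omul_oct octN octD; congr oct; ring. Qed.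

Lemma PV_eq (a u1 u2 u3 v1 v2 v3 b : F) :
  omul (oct a u1 u2 u3 v1 v2 v3 b) (oe1 F) -
  omul (oe1 F) (omul (oct a u1 u2 u3 v1 v2 v3 b) (oe1 F)) = oct 0 0 0 0 v1 v2 v3 0.
Proof. by rewrite /oe1 !omul_oct octN octD; congr oct; ring. Qed.

Lemma P2_eq (a u1 u2 u3 v1 v2 v3 b : F) :
  oct a u1 u2 u3 v1 v2 v3 b - omul (oe1 F) (oct a u1 u2 u3 v1 v2 v3 b)
  - omul (oct a u1 u2 u3 v1 v2 v3 b) (oe1 F)
  + omul (omul (oe1 F) (oct a u1 u2 u3 v1 v2 v3 b)) (oe1 F) = oct 0 0 0 0 0 0 0 b.
Proof. by rewrite /oe1 !omul_oct !octN !octD; congr oct; ring. Qed.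

Section G2.
Variable g : O -> O.
Hypothesis Hg : is_G2 g.
Local Notation S := (in_image g A).
Hypothesis He1 : S (oe1 F).

Lemma S_PU y : S y -> S (oct 0 (ocoord y 1) (ocoord y 2) (ocoord y 3) 0 0 0 0).
Proof.
move=> Hy; rewrite -(PU_eq (ocoord y 0) _ _ _ (ocoord y 4) (ocoord y 5) (ocoord y 6) (ocoord y 7)) -octE.
by apply: imgB => //; apply: imgM => //; apply: imgM.
Qed.

Lemma S_PV y : S y -> S (oct 0 0 0 0 (ocoord y 4) (ocoord y 5) (ocoord y 6) 0).
Proof.
move=> Hy; rewrite -(PV_eq (ocoord y 0) (ocoord y 1) (ocoord y 2) (ocoord y 3) _ _ _ (ocoord y 7)) -octE.
by apply: imgB => //; apply: imgM => //; apply: imgM.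
Qed.

Lemma S_P2 y : S y -> S (oct 0 0 0 0 0 0 0 (ocoord y 7)).
Proof.
move=> Hy; rewrite -(P2_eq (ocoord y 0) (ocoord y 1) (ocoord y 2) (ocoord y 3) (ocoord y 4) (ocoord y 5) (ocoord y 6)) -octE.
apply: imgD => //; last by apply: imgM => //; apply: imgM.
by apply: imgB => //; [apply: imgB | apply: imgM] => //; apply: imgM.
Qed.
End G2.

Lemma notspan_nz (y : O) : y \notin <<[:: oe1 F; oe2 F]>>%VS ->
  nz3 (ocoord y 1) (ocoord y 2) (ocoord y 3) \/ nz3 (ocoord y 4) (ocoord y 5) (ocoord y 6).
Proof.
move=> Hy; case Hu: (nz3 _ _ _); first by left.
case Hv: (nz3 _ _ _); first by right.
move/negbT/nz3F: Hu => [H1 H2 H3]; move/negbT/nz3F: Hv => [H4 H5 H6].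
case/negP: Hy; rewrite (octE y) H1 H2 H3 H4 H5 H6.
have -> : oct (ocoord y 0) 0 0 0 0 0 0 (ocoord y 7) =
  ocoord y 0 *: oe1 F + ocoord y 7 *: oe2 F.
  by rewrite /oe1 /oe2 !octZ octD; congr oct; ring.
exact: mem_span2.
Qed.

End Img.


Section D.
Variable F : fieldType.
Local Notation O := ('rV[F]_8).

Lemma SL_e1 (a1 a2 a3 b1 b2 b3 c1 c2 c3 : F) :
  SL a1 a2 a3 b1 b2 b3 c1 c2 c3 (oe1 F) = oe1 F.
Proof. by rewrite /oe1 SL_oct /SL0; cbv zeta; rewrite /dt; congr oct; ring. Qed.

Lemma SL_e2 (a1 a2 a3 b1 b2 b3 c1 c2 c3 : F) :
  SL a1 a2 a3 b1 b2 b3 c1 c2 c3 (oe2 F) = oe2 F.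
Proof. by rewrite /oe2 SL_oct /SL0; cbv zeta; rewrite /dt; congr oct; ring. Qed.

Lemma SL_u (a1 a2 a3 b1 b2 b3 c1 c2 c3 : F) :
  det3 a1 a2 a3 b1 b2 b3 c1 c2 c3 != 0 ->
  SL a1 a2 a3 b1 b2 b3 c1 c2 c3 (oct 0 a1 a2 a3 0 0 0 0) = ou1 F.
Proof.
rewrite /det3 /dt /cx1 /cx2 /cx3 => Hd.
rewrite /ou1 SL_oct /SL0; cbv zeta; rewrite /det3 /dt /cx1 /cx2 /cx3.
by congr oct; field.
Qed.

Lemma SL_v (a1 a2 a3 b1 b2 b3 c1 c2 c3 v1 v2 v3 : F) :
  SL a1 a2 a3 b1 b2 b3 c1 c2 c3 (oct 0 0 0 0 v1 v2 v3 0) =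
  oct 0 0 0 0 (dt a1 a2 a3 v1 v2 v3)
    (dt (b1 / det3 a1 a2 a3 b1 b2 b3 c1 c2 c3) (b2 / det3 a1 a2 a3 b1 b2 b3 c1 c2 c3)
        (b3 / det3 a1 a2 a3 b1 b2 b3 c1 c2 c3) v1 v2 v3)
    (dt c1 c2 c3 v1 v2 v3) 0.
Proof. by rewrite SL_oct /SL0; cbv zeta; rewrite /dt; congr oct; ring. Qed.

Lemma exists_bc (u1 u2 u3 : F) : nz3 u1 u2 u3 ->
  exists b1 b2 b3 c1 c2 c3, det3 u1 u2 u3 b1 b2 b3 c1 c2 c3 != 0.
Proof.
case/or3P => H.
- exists 0, 1, 0, 0, 0, 1.
  by have -> : det3 u1 u2 u3 0 1 0 0 0 1 = u1 by rewrite /det3 /dt /cx1 /cx2 /cx3; ring.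
- exists 0, 0, 1, 1, 0, 0.
  by have -> : det3 u1 u2 u3 0 0 1 1 0 0 = u2 by rewrite /det3 /dt /cx1 /cx2 /cx3; ring.
- exists 1, 0, 0, 0, 1, 0.
  by have -> : det3 u1 u2 u3 1 0 0 0 1 0 = u3 by rewrite /det3 /dt /cx1 /cx2 /cx3; ring.
Qed.

Lemma exists_b (v1 v2 v3 : F) : nz3 v1 v2 v3 -> exists b1 b2 b3, dt b1 b2 b3 v1 v2 v3 != 0.
Proof.
case/or3P => H.
- by exists 1, 0, 0; have -> : dt 1 0 0 v1 v2 v3 = v1 by rewrite /dt; ring.
- by exists 0, 1, 0; have -> : dt 0 1 0 v1 v2 v3 = v2 by rewrite /dt; ring.
- by exists 0, 0, 1; have -> : dt 0 0 1 v1 v2 v3 = v3 by rewrite /dt; ring.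
Qed.

Lemma exists_c (u1 u2 u3 v1 v2 v3 : F) : nz3 u1 u2 u3 -> dt u1 u2 u3 v1 v2 v3 = 0 ->
  exists c1 c2 c3 k, [/\ k != 0, dt c1 c2 c3 v1 v2 v3 = 0 &
    forall b1 b2 b3, det3 u1 u2 u3 b1 b2 b3 c1 c2 c3 = k * dt b1 b2 b3 v1 v2 v3].
Proof.
move=> Hu Huv; case/or3P: Hu => H.
- exists 0, (- v3), v2, u1; split => //; first by rewrite /dt; ring.
  move=> b1 b2 b3; transitivity (u1 * dt b1 b2 b3 v1 v2 v3 - b1 * dt u1 u2 u3 v1 v2 v3).
    by rewrite /det3 /dt /cx1 /cx2 /cx3; ring.
  by rewrite Huv mulr0 subr0.
- exists v3, 0, (- v1), u2; split => //; first by rewrite /dt; ring.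
  move=> b1 b2 b3; transitivity (u2 * dt b1 b2 b3 v1 v2 v3 - b2 * dt u1 u2 u3 v1 v2 v3).
    by rewrite /det3 /dt /cx1 /cx2 /cx3; ring.
  by rewrite Huv mulr0 subr0.
- exists (- v2), v1, 0, u3; split => //; first by rewrite /dt; ring.
  move=> b1 b2 b3; transitivity (u3 * dt b1 b2 b3 v1 v2 v3 - b3 * dt u1 u2 u3 v1 v2 v3).
    by rewrite /det3 /dt /cx1 /cx2 /cx3; ring.
  by rewrite Huv mulr0 subr0.
Qed.

Lemma lin1 (p q r s : F) : p != 0 -> p * q - r * s = 0 -> q = s / p * r.
Proof.
move=> Hp /eqP; rewrite subr_eq0 => /eqP H.
by rewrite -[q](mulKf Hp) H; ring.
Qed.
Lemma lin2 (p q r s : F) : p != 0 -> r * s - p * q = 0 -> q = s / p * r.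
Proof.
move=> Hp H; apply: lin1 => //; by rewrite -opprB H oppr0.
Qed.

Lemma parallel (u1 u2 u3 w1 w2 w3 : F) : nz3 u1 u2 u3 ->
  cx1 u1 u2 u3 w1 w2 w3 = 0 -> cx2 u1 u2 u3 w1 w2 w3 = 0 -> cx3 u1 u2 u3 w1 w2 w3 = 0 ->
  exists k, [/\ w1 = k * u1, w2 = k * u2 & w3 = k * u3].
Proof.
rewrite /cx1 /cx2 /cx3 => Hu H1 H2 H3; case/or3P: Hu => H.
- exists (w1 / u1); split; first by field.
  + exact: lin1 H3.
  + exact: lin2 H2.
- exists (w2 / u2); split.
  + exact: lin2 H3.
  + by field.
  + exact: lin1 H1.
- exists (w3 / u3); split.
  + exact: lin1 H2.
  + exact: lin2 H1.
  + by field.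
Qed.

End D.


Section E.
Variable F : fieldType.
Local Notation O := ('rV[F]_8).
Variable A : {vspace O}.
Hypothesis HA : is_subalgebra A.

Definition condA (g : O -> O) :=
  in_image g A (oe1 F) /\ in_image g A (oe2 F) /\ in_image g A (ou1 F).
Definition condB (g : O -> O) :=
  in_image g A (oe1 F) /\ in_image g A (ou1 F) /\ in_image g A (ov2 F).

Lemma prodUU (u1 u2 u3 w1 w2 w3 : F) :
  omul (oct 0 u1 u2 u3 0 0 0 0) (oct 0 w1 w2 w3 0 0 0 0) =
  oct 0 0 0 0 (cx1 u1 u2 u3 w1 w2 w3) (cx2 u1 u2 u3 w1 w2 w3) (cx3 u1 u2 u3 w1 w2 w3) 0.
Proof. by rewrite omul_oct /cx1 /cx2 /cx3; congr oct; ring. Qed.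

Lemma prodVV (u1 u2 u3 w1 w2 w3 : F) :
  omul (oct 0 0 0 0 u1 u2 u3 0) (oct 0 0 0 0 w1 w2 w3 0) =
  oct 0 (- cx1 u1 u2 u3 w1 w2 w3) (- cx2 u1 u2 u3 w1 w2 w3) (- cx3 u1 u2 u3 w1 w2 w3) 0 0 0 0.
Proof. by rewrite omul_oct /cx1 /cx2 /cx3; congr oct; ring. Qed.

Lemma prodVU (u1 u2 u3 v1 v2 v3 : F) :
  omul (oct 0 0 0 0 v1 v2 v3 0) (oct 0 u1 u2 u3 0 0 0 0) =
  oct 0 0 0 0 0 0 0 (dt u1 u2 u3 v1 v2 v3).
Proof. by rewrite omul_oct /dt; congr oct; ring. Qed.

Lemma LemA (g : O -> O) (u1 u2 u3 : F) : is_G2 g ->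
  in_image g A (oe1 F) -> in_image g A (oe2 F) ->
  in_image g A (oct 0 u1 u2 u3 0 0 0 0) -> nz3 u1 u2 u3 ->
  exists h, is_G2 h /\ condA (h \o g).
Proof.
move=> Hg H1 H2 Hu Hnz.
have [b1 [b2 [b3 [c1 [c2 [c3 Hd]]]]]] := exists_bc Hnz.
pose h := SL u1 u2 u3 b1 b2 b3 c1 c2 c3.
exists h; split; first exact: SL_G2.
split; first by have := img_comp h H1; rewrite /h SL_e1.
split; first by have := img_comp h H2; rewrite /h SL_e2.
by have := img_comp h Hu; rewrite /h SL_u.
Qed.

Lemma LemB (g : O -> O) (u1 u2 u3 v1 v2 v3 : F) : is_G2 g ->
  in_image g A (oe1 F) ->
  in_image g A (oct 0 u1 u2 u3 0 0 0 0) -> in_image g A (oct 0 0 0 0 v1 v2 v3 0) ->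
  nz3 u1 u2 u3 -> nz3 v1 v2 v3 -> dt u1 u2 u3 v1 v2 v3 = 0 ->
  exists h, is_G2 h /\ condB (h \o g).
Proof.
move=> Hg H1 Hu Hv Hnu Hnv Huv.
have [c1 [c2 [c3 [k [Hk Hcv Hdet]]]]] := exists_c Hnu Huv.
have [b1 [b2 [b3 Hbv]]] := exists_b Hnv.
have Hd : det3 u1 u2 u3 b1 b2 b3 c1 c2 c3 != 0 by rewrite Hdet mulf_neq0.
pose h := SL u1 u2 u3 b1 b2 b3 c1 c2 c3.
have Hh : is_G2 h by exact: SL_G2.
exists h; split => //.
split; first by have := img_comp h H1; rewrite /h SL_e1.
split; first by have := img_comp h Hu; rewrite /h SL_u.
suff -> : ov2 F = (det3 u1 u2 u3 b1 b2 b3 c1 c2 c3 / dt b1 b2 b3 v1 v2 v3) *: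
    h (oct 0 0 0 0 v1 v2 v3 0).
  exact: (imgZ (G2_comp Hg Hh) _ (img_comp h Hv)).
rewrite /h SL_v Huv Hcv octZ /ov2 !mulr0.
move: Hd Hbv; rewrite /det3 /dt /cx1 /cx2 /cx3 => Hd Hbv.
congr oct. clear -Hd Hbv. by field; rewrite Hd Hbv.
Qed.


Lemma phase2 (g : O -> O) : is_G2 g -> (3 <= \dim A)%N -> in_image g A (oe1 F) ->
  exists h, is_G2 h /\ (condA (h \o g) \/ condB (h \o g)).
Proof.
move=> Hg Hdim He1.
case: (classic (in_image g A (oe2 F))) => He2.
  have [y [Sy Hy]] := dimL Hg Hdim (oe1 F) (oe2 F).
  case: (notspan_nz Hy) => Hnz.
    have [h [Hh HA']] := LemA Hg He1 He2 (S_PU HA Hg He1 Sy) Hnz.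
    by exists h; split => //; left.
  have Hsg := G2_comp Hg (@Sg_G2 F).
  have S1 : in_image (@Sg F \o g) A (oe1 F).
    by have := img_comp (@Sg F) He2; rewrite /oe2 Sg_oct !oppr0.
  have S2 : in_image (@Sg F \o g) A (oe2 F).
    by have := img_comp (@Sg F) He1; rewrite /oe1 Sg_oct !oppr0.
  have Su := img_comp (@Sg F) (S_PV HA Hg He1 Sy); rewrite Sg_oct !oppr0 in Su.
  have Hnz' : nz3 (- ocoord y 4) (- ocoord y 5) (- ocoord y 6) by rewrite /nz3 !oppr_eq0.
  have [h [Hh HA']] := LemA Hsg S1 S2 Su Hnz'.
  by exists (h \o @Sg F); split; [exact: G2_comp (@Sg_G2 F) Hh | left].
have Hb : forall z, in_image g A z -> ocoord z 7 = 0.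
  move=> z Hz; case: (eqVneq (ocoord z 7) 0) => // Hn; exfalso; apply: He2.
  have := imgZ Hg (ocoord z 7)^-1 (S_P2 HA Hg He1 Hz).
  by rewrite octZ !mulr0 mulVf.
have Horth : forall y z, in_image g A y -> in_image g A z ->
    dt (ocoord y 1) (ocoord y 2) (ocoord y 3) (ocoord z 4) (ocoord z 5) (ocoord z 6) = 0.
  move=> y z Hy Hz; case: (eqVneq (dt (ocoord y 1) (ocoord y 2) (ocoord y 3) (ocoord z 4) (ocoord z 5) (ocoord z 6)) 0) => // Hn; exfalso; apply: He2.
  have := imgM HA Hg (S_PV HA Hg He1 Hz) (S_PU HA Hg He1 Hy); rewrite prodVU => H.
  by have := imgZ Hg (dt (ocoord y 1) (ocoord y 2) (ocoord y 3) (ocoord z 4) (ocoord z 5)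
     (ocoord z 6))^-1 H; rewrite octZ !mulr0 mulVf.
have [y0 [Sy0 Hy0]] := dimL Hg Hdim (oe1 F) (oe2 F).
have key : exists y z, [/\ in_image g A y, in_image g A z,
    nz3 (ocoord y 1) (ocoord y 2) (ocoord y 3) & nz3 (ocoord z 4) (ocoord z 5) (ocoord z 6)].
  case: (notspan_nz Hy0) => Hnz.
    case: (classic (exists z, in_image g A z /\ nz3 (ocoord z 4) (ocoord z 5) (ocoord z 6)))
      => [[z [Sz Hz]] | Hno]; first by exists y0, z.
    exfalso.
    have [z [Sz Hz]] := dimL Hg Hdim (oe1 F) (oct 0 (ocoord y0 1) (ocoord y0 2) (ocoord y0 3) 0 0 0 0).
    have Sw := imgM HA Hg (S_PU HA Hg He1 Sy0) (S_PU HA Hg He1 Sz); rewrite prodUU in Sw.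
    have Hc : ~~ nz3 (cx1 (ocoord y0 1) (ocoord y0 2) (ocoord y0 3) (ocoord z 1) (ocoord z 2) (ocoord z 3))
       (cx2 (ocoord y0 1) (ocoord y0 2) (ocoord y0 3) (ocoord z 1) (ocoord z 2) (ocoord z 3))
       (cx3 (ocoord y0 1) (ocoord y0 2) (ocoord y0 3) (ocoord z 1) (ocoord z 2) (ocoord z 3)).
      by apply/negP => Hc; apply: Hno; eexists; split; [exact: Sw | rewrite !ocoord_oct].
    case/nz3F: Hc => C1 C2 C3; have [k [K1 K2 K3]] := parallel Hnz C1 C2 C3.
    have Hvz : ~~ nz3 (ocoord z 4) (ocoord z 5) (ocoord z 6).
      by apply/negP => H; apply: Hno; exists z.
    case/nz3F: Hvz => V1 V2 V3; have B := Hb z Sz.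
    case/negP: Hz; rewrite (octE z) K1 K2 K3 V1 V2 V3 B.
    have -> : oct (ocoord z 0) (k * ocoord y0 1) (k * ocoord y0 2) (k * ocoord y0 3) 0 0 0 0 =
      ocoord z 0 *: oe1 F + k *: oct 0 (ocoord y0 1) (ocoord y0 2) (ocoord y0 3) 0 0 0 0.
      by rewrite /oe1 !octZ octD; congr oct; ring.
    exact: mem_span2.
  case: (classic (exists z, in_image g A z /\ nz3 (ocoord z 1) (ocoord z 2) (ocoord z 3)))
    => [[z [Sz Hz]] | Hno]; first by exists z, y0.
  exfalso.
  have [z [Sz Hz]] := dimL Hg Hdim (oe1 F) (oct 0 0 0 0 (ocoord y0 4) (ocoord y0 5) (ocoord y0 6) 0).
  have Sw := imgM HA Hg (S_PV HA Hg He1 Sy0) (S_PV HA Hg He1 Sz); rewrite prodVV in Sw.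
  have Hc : ~~ nz3 (cx1 (ocoord y0 4) (ocoord y0 5) (ocoord y0 6) (ocoord z 4) (ocoord z 5) (ocoord z 6))
     (cx2 (ocoord y0 4) (ocoord y0 5) (ocoord y0 6) (ocoord z 4) (ocoord z 5) (ocoord z 6))
     (cx3 (ocoord y0 4) (ocoord y0 5) (ocoord y0 6) (ocoord z 4) (ocoord z 5) (ocoord z 6)).
    apply/negP => Hc; apply: Hno; eexists; split; first exact: Sw.
    by rewrite !ocoord_oct // /nz3 !oppr_eq0.
  case/nz3F: Hc => C1 C2 C3; have [k [K1 K2 K3]] := parallel Hnz C1 C2 C3.
  have Huz : ~~ nz3 (ocoord z 1) (ocoord z 2) (ocoord z 3).
    by apply/negP => H; apply: Hno; exists z.
  case/nz3F: Huz => U1 U2 U3; have B := Hb z Sz.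
  case/negP: Hz; rewrite (octE z) K1 K2 K3 U1 U2 U3 B.
  have -> : oct (ocoord z 0) 0 0 0 (k * ocoord y0 4) (k * ocoord y0 5) (k * ocoord y0 6) 0 =
    ocoord z 0 *: oe1 F + k *: oct 0 0 0 0 (ocoord y0 4) (ocoord y0 5) (ocoord y0 6) 0.
    by rewrite /oe1 !octZ octD; congr oct; ring.
  exact: mem_span2.
have [y [z [Sy Sz Hu Hv]]] := key.
have [h [Hh HB]] := LemB Hg He1 (S_PU HA Hg He1 Sy) (S_PV HA Hg He1 Sz) Hu Hv (Horth y z Sy Sz).
by exists h; split => //; right.
Qed.
End E.


Section G.
Variable F : closedFieldType.
Local Notation O := ('rV[F]_8).

Lemma idem_e1 (e : O) : omul e e = e -> otr e = 1 -> exists g, is_G2 g /\ g e = oe1 F.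
Proof.
move=> He Ht; rewrite (octE e) in He Ht *.
move: (ocoord e 0) (ocoord e 1) (ocoord e 2) (ocoord e 3) (ocoord e 4) (ocoord e 5)
  (ocoord e 6) (ocoord e 7) He Ht => a u1 u2 u3 v1 v2 v3 b He Hab.
rewrite otr_oct in Hab.
have Ha : a * a + dt u1 u2 u3 v1 v2 v3 = a.
  by have := congr1 (fun z => ocoord z 0) He; rewrite omul_oct !ocoord_oct.
have [c Hc] : exists c, dt u1 u2 u3 v1 v2 v3 * c ^+ 2 + (a - b) * c - 1 = 0.
  case: (eqVneq (dt u1 u2 u3 v1 v2 v3) 0) => Huv.
    exists (a - b); rewrite Huv mul0r add0r.
    rewrite Huv addr0 in Ha.
    have Hb : b = 1 - a by rewrite -Hab; ring.
    transitivity (4%:R * (a * a - a)); first by rewrite Hb; ring.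
    by rewrite Ha subrr mulr0.
  have [x Hx] := @solve_monicpoly F 2
    (fun i => if i == 0%N then (dt u1 u2 u3 v1 v2 v3)^-1 else - (a - b) / dt u1 u2 u3 v1 v2 v3) isT.
  rewrite !big_ord_recl big_ord0 /= in Hx.
  exists x; rewrite Hx; move: Huv; rewrite /dt => Huv.
  by field.
have [a' [u1' [u2' [u3' [b' [Ee' Hab']]]]]] : exists a' u1' u2' u3' b',
   Yw (- c * v1) (- c * v2) (- c * v3) (oct a u1 u2 u3 v1 v2 v3 b) = oct a' u1' u2' u3' 0 0 0 b'
   /\ a' + b' = 1.
  pose w1 := - c * v1; pose w2 := - c * v2; pose w3 := - c * v3.
  pose a' := a - dt w1 w2 w3 u1 u2 u3; pose b' := b + dt w1 w2 w3 u1 u2 u3.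
  pose u1' := u1 + cx1 w1 w2 w3 v1 v2 v3.
  pose u2' := u2 + cx2 w1 w2 w3 v1 v2 v3.
  pose u3' := u3 + cx3 w1 w2 w3 v1 v2 v3.
  have Ee' : Yw (- c * v1) (- c * v2) (- c * v3) (oct a u1 u2 u3 v1 v2 v3 b) = oct a' u1' u2' u3' 0 0 0 b'.
    rewrite Yw_oct /Yw0; congr oct.
    - transitivity (- v1 * (dt u1 u2 u3 v1 v2 v3 * c ^+ 2 + (a - b) * c - 1)).
        by rewrite /w1 /w2 /w3 /dt; ring.
      by rewrite Hc mulr0.
    - transitivity (- v2 * (dt u1 u2 u3 v1 v2 v3 * c ^+ 2 + (a - b) * c - 1)).
        by rewrite /w1 /w2 /w3 /dt; ring.
      by rewrite Hc mulr0.
    - transitivity (- v3 * (dt u1 u2 u3 v1 v2 v3 * c ^+ 2 + (a - b) * c - 1)).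
        by rewrite /w1 /w2 /w3 /dt; ring.
      by rewrite Hc mulr0.
  have Hab' : a' + b' = 1 by rewrite /a' /b'; transitivity (a + b); [ring | exact: Hab].
  by exists a', u1', u2', u3', b'.
have He' : omul (oct a' u1' u2' u3' 0 0 0 b') (oct a' u1' u2' u3' 0 0 0 b') =
    oct a' u1' u2' u3' 0 0 0 b'.
  by rewrite -Ee' -G2_mul ?He //; exact: Yw_G2.
have Ha' : a' * a' = a'.
  by have := congr1 (fun z => ocoord z 0) He'; rewrite omul_oct !ocoord_oct // !mulr0 !addr0.
have : a' * (a' - 1) == 0 by rewrite mulrBr mulr1 Ha' subrr.
rewrite mulf_eq0 subr_eq0 => /orP [/eqP A0 | /eqP A1].
  have B1 : b' = 1 by rewrite -Hab' A0 add0r.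
  exists (Yw u1' u2' u3' \o (@Sg F \o Yw (- c * v1) (- c * v2) (- c * v3))); split.
    apply: G2_comp; last exact: Yw_G2.
    apply: G2_comp; [exact: Yw_G2 | exact: Sg_G2].
  rewrite /= Ee' A0 B1 Sg_oct Yw_oct /Yw0 /oe1 /dt /cx1 /cx2 /cx3.
  by congr oct; ring.
have B0 : b' = 0 by rewrite -(addKr a' b') Hab' A1 addNr.
exists (Xw (- u1') (- u2') (- u3') \o Yw (- c * v1) (- c * v2) (- c * v3)); split.
  by apply: G2_comp; [exact: Yw_G2 | exact: Xw_G2].
rewrite /= Ee' A1 B0 Xw_oct /Xw0 /oe1 /dt /cx1 /cx2 /cx3.
by congr oct; ring.
Qed.
End G.


Section H.
Variable F : fieldType.
Local Notation O := ('rV[F]_8).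

Lemma sq_id (a u1 u2 u3 v1 v2 v3 b : F) :
  omul (oct a u1 u2 u3 v1 v2 v3 b) (oct a u1 u2 u3 v1 v2 v3 b) =
  (a + b) *: oct a u1 u2 u3 v1 v2 v3 b - (a * b - dt u1 u2 u3 v1 v2 v3) *: oct 1 0 0 0 0 0 0 1.
Proof. by rewrite omul_oct !octZ octN octD /dt; congr oct; ring. Qed.

Lemma omulZ (c d : F) (x y : O) : omul (c *: x) (d *: y) = (c * d) *: omul x y.
Proof. by rewrite (octE x) (octE y) (octZ c) (octZ d) !omul_oct octZ; congr oct; ring. Qed.
End H.

Unset Implicit Arguments.
Theorem lemma6p11 (F : closedFieldType) (A : {vspace 'rV[F]_8}) :
  (2 \in [pchar F])%N ->
  is_subalgebra A ->
  (exists2 x, x \in A & otr x != 0) ->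
  (3 <= \dim A)%N ->
  exists g : 'rV[F]_8 -> 'rV[F]_8, is_G2 g /\
    ((in_image g A (oe1 F) /\ in_image g A (oe2 F) /\ in_image g A (ou1 F)) \/
     (in_image g A (oe1 F) /\ in_image g A (ou1 F) /\ in_image g A (ov2 F))).
Proof.
move=> Hch Hsub [x Hx Htr] Hdim.
have two : (2%:R : F) = 0 := pcharf0 Hch.
have [e [HeA He Het]] : exists e, [/\ e \in A, omul e e = e & otr e = 1].
  rewrite (octE x) in Hx Htr.
  move: (ocoord x 0) (ocoord x 1) (ocoord x 2) (ocoord x 3) (ocoord x 4) (ocoord x 5)
    (ocoord x 6) (ocoord x 7) Hx Htr => a u1 u2 u3 v1 v2 v3 b Hx Ht.
  rewrite otr_oct in Ht.
  pose X := oct a u1 u2 u3 v1 v2 v3 b.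
  pose oe : 'rV[F]_8 := oct 1 0 0 0 0 0 0 1.
  have [l [Hl Hl0]] : exists l, l ^+ 2 + (a + b) * l + (a * b - dt u1 u2 u3 v1 v2 v3) = 0 /\
      (a * b - dt u1 u2 u3 v1 v2 v3 = 0 -> l = 0).
    case: (eqVneq (a * b - dt u1 u2 u3 v1 v2 v3) 0) => Hn.
      by exists 0; split => //; rewrite Hn; ring.
    have [y Hy] := @solve_monicpoly F 2
      (fun i => if i == 0%N then - (a * b - dt u1 u2 u3 v1 v2 v3) else - (a + b)) isT.
    rewrite !big_ord_recl big_ord0 /= in Hy.
    exists y; split; first by rewrite Hy; ring.
    by move=> Hn'; rewrite Hn' eqxx in Hn.
  have HyA : oct (a + l) u1 u2 u3 v1 v2 v3 (b + l) \in A.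
    have -> : oct (a + l) u1 u2 u3 v1 v2 v3 (b + l) = X + l *: oe.
      by rewrite /X /oe octZ octD; congr oct; ring.
    case: (eqVneq (a * b - dt u1 u2 u3 v1 v2 v3) 0) => Hn.
      by rewrite Hl0 // scale0r addr0.
    have Hid : (a + b) *: X - omul X X = (a * b - dt u1 u2 u3 v1 v2 v3) *: oe.
      by rewrite /X sq_id opprB addrC subrK.
    have Hoe : oe = (a * b - dt u1 u2 u3 v1 v2 v3)^-1 *: ((a + b) *: X - omul X X).
      by rewrite Hid scalerA mulVf // scale1r.
    apply: memvD => //; apply: memvZ; rewrite Hoe; apply: memvZ.
    by apply: memvB; [apply: memvZ | apply: Hsub].
  have T1 : a + l + (b + l) = a + b.
    by transitivity (a + b + 2%:R * l); [ring | rewrite two mul0r addr0].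
  have T2 : (a + l) * (b + l) - dt u1 u2 u3 v1 v2 v3 = 0.
    by rewrite -Hl /dt; ring.
  have Hyy : omul (oct (a + l) u1 u2 u3 v1 v2 v3 (b + l)) (oct (a + l) u1 u2 u3 v1 v2 v3 (b + l))
     = (a + b) *: oct (a + l) u1 u2 u3 v1 v2 v3 (b + l).
    by rewrite sq_id T1 T2 scale0r subr0.
  exists ((a + b)^-1 *: oct (a + l) u1 u2 u3 v1 v2 v3 (b + l)); split.
  - exact: memvZ.
  - by rewrite omulZ Hyy scalerA -mulrA mulVf ?mulr1.
  - rewrite octZ otr_oct.
    by transitivity ((a + b)^-1 * (a + l + (b + l))); [ring | rewrite T1 mulVf].
have [g0 [Hg0 Hge]] := idem_e1 He Het.
have S1 : in_image g0 A (oe1 F) by exists e.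
have [h [Hh Hc]] := phase2 Hsub Hg0 Hdim S1.
exists (h \o g0); split; first exact: G2_comp Hg0 Hh.
exact: Hc.
Qed.
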